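(* Let $(\tilde\Theta^n_I)$ be a congruent family of covariant $n$-tensor fields on $\mathcal M_+(I)$, $I$ ranging over finite sets, let $I$ be a finite set and $\lambda>0$. If $\vec i=(i_1,\dots,i_n),\vec j=(j_1,\dots,j_n)\in I^n$ are multiindices with $\mathbf P(\vec i)=\mathbf P(\vec j)$, then $$(\tilde\Theta^n_I)_{\lambda c_I}(\delta_{i_1},\dots,\delta_{i_n})=(\tilde\Theta^n_I)_{\lambda c_I}(\delta_{j_1},\dots,\delta_{j_n}).$$
   Context: For a finite set $I$: $\mathcal S(I)=\{\sum_{i\in I}x_i\delta_i:x_i\in\mathbb R\}$, $\mathcal M_+(I)=\{\sum\mu_i\delta_i:\mu_i>0\}$ (an open subset with tangent space $\mathcal S(I)$), and $c_I:=\frac1{|I|}\sum_{i\in I}\delta_i$. A covariant $n$-tensor field on $\mathcal M_+(I)$ is a continuously varying family of $n$-multilinear forms on $\mathcal S(I)$. A Markov kernel $K:I\to\mathcal P(I')$ between finite sets is a stochastic matrix $K(i)=\sum_{i'}K^i_{i'}\delta_{i'}$, with $K_*(\sum x_i\delta_i)=\sum_{i,i'}K^i_{i'}x_i\delta_{i'}$; it is congruent if there is a map $\kappa:I'\to I$ with $K^i_{i'}=0$ whenever $\kappa(i')\ne i$. The family is congruent if $(\tilde\Theta^n_{I'})_{K_*\mu}(K_*V_1,\dots,K_*V_n)=(\tilde\Theta^n_I)_\mu(V_1,\dots,V_n)$ for every congruent Markov kernel $K:I\to\mathcal P(I')$ between finite sets with $K_*(\mathcal M_+(I))\subset\mathcal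 M_+(I')$. For a multiindex $\vec i\in I^n$, $\mathbf P(\vec i)$ is the partition of $\{1,\dots,n\}$ into the equivalence classes of $k\sim l\iff i_k=i_l$. *)

(* Defs.v *)
From HB Require Import structures.
From mathcomp Require Import all_boot all_order all_algebra.
From mathcomp Require Import all_classical all_reals all_analysis.
Set Implicit Arguments. Unset Strict Implicit. Unset Printing Implicit Defensive.
Import Order.TTheory GRing.Theory Num.Theory.
Import numFieldNormedType.Exports.
Local Open Scope ring_scope.
Local Open Scope classical_set_scope.

(* S(I) is modelled by I -> R (x = sum_i x_i delta_i);
   M_+(I) is the set of mu : I -> R with all mu i > 0. *)
Definition Mplus (R : realType) (I : finType) : set (I -> R) :=
  [set mu | forall i, 0 < mu i].

Definition delta (R : realType) (I : finType) (i : I) : I -> R :=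
  fun j => (j == i)%:R.

Definition cI (R : realType) (I : finType) : I -> R :=
  fun _ => (#|I|%:R)^-1.

Definition tensor_family (R : realType) (n : nat) :=
  forall I : finType, (I -> R) -> ('I_n -> (I -> R)) -> R.

Definition upd (R : realType) (I : finType) (n : nat)
  (V : 'I_n -> (I -> R)) (k : 'I_n) (x : I -> R) : 'I_n -> (I -> R) :=
  fun l => if l == k then x else V l.

Definition multilinear (R : realType) (I : finType) (n : nat)
  (F : ('I_n -> (I -> R)) -> R) : Prop :=
  forall (V : 'I_n -> (I -> R)) (k : 'I_n) (a : R) (x y : I -> R),
    F (upd V k (fun i => a * x i + y i)) = a * F (upd V k x) + F (upd V k y).

Definition tensor_field (R : realType) (n : nat) (I : finType)
  (T : (I -> R) -> ('I_n -> (I -> R)) -> R) : Prop :=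
  (forall mu, @Mplus R I mu -> multilinear (T mu)) /\
  (forall V : 'I_n -> (I -> R), {within (@Mplus R I : set {ptws I -> R}), continuous (fun mu : {ptws I -> R} => T mu V)}).

Definition markov_kernel (R : realType) (I I' : finType) (K : I -> I' -> R) : Prop :=
  (forall i i', 0 <= K i i') /\ (forall i, \sum_(i' : I') K i i' = 1).

Definition congruent_kernel (R : realType) (I I' : finType) (K : I -> I' -> R) : Prop :=
  markov_kernel K /\
  exists kappa : I' -> I, forall i i', kappa i' != i -> K i i' = 0.

Definition pushforward (R : realType) (I I' : finType) (K : I -> I' -> R)
  (x : I -> R) : I' -> R :=
  fun i' => \sum_(i : I) K i i' * x i.

Definition congruent_family (R : realType) (n : nat) (Theta : tensor_family R n) : Prop :=
  forall (I I' : finType) (K : I -> I' -> R),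
    congruent_kernel K ->
    (forall mu, @Mplus R I mu -> @Mplus R I' (pushforward K mu)) ->
    forall mu, @Mplus R I mu ->
    forall V : 'I_n -> (I -> R),
      Theta I' (pushforward K mu) (fun k => pushforward K (V k)) = Theta I mu V.

Definition Ppart (I : finType) (n : nat) (iv : 'I_n -> I) : {set {set 'I_n}} :=
  ([set ([set l | iv l == iv k])%SET | k : 'I_n])%SET.

(* Main.v *)
Require Import Defs.
From HB Require Import structures.
From mathcomp Require Import all_boot all_order all_algebra.
From mathcomp Require Import all_classical all_reals all_analysis.
Import Order.TTheory GRing.Theory Num.Theory.
Local Open Scope ring_scope.

Lemma Ppart_key (I : finType) (n : nat) (iv jv : 'I_n -> I) :
  Ppart iv = Ppart jv -> forall k l, (iv l == iv k) -> (jv l == jv k).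
Proof.
move=> hP k l.
have : ([set l | iv l == iv k])%SET \in Ppart jv.
  by rewrite -hP; apply/imsetP; exists k.
case/imsetP=> k' _ E.
have Hk : jv k == jv k'.
  by have := congr1 (fun S : {set 'I_n} => k \in S) E; rewrite /= !inE eqxx => <-.
have := congr1 (fun S : {set 'I_n} => l \in S) E; rewrite /= !inE => ->.
by rewrite (eqP Hk).
Qed.

Lemma ext_inj (I : finType) (n : nat) (iv jv : 'I_n -> I) :
  (forall k l, (iv l == iv k) = (jv l == jv k)) ->
  exists s : I -> I, injective s /\ forall k, s (iv k) = jv k.
Proof.
move=> key.
pose A := ([set iv k | k : 'I_n])%SET.
pose B := ([set jv k | k : 'I_n])%SET.
pose g x := if [pick k | iv k == x] is Some k then jv k else x.
have giv k : g (iv k) = jv k.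
  rewrite /g; case: pickP => [k' /eqP Hk|/(_ k)]; last by rewrite eqxx.
  by apply/eqP; rewrite -key Hk.
have gB : B = (g @: A)%SET.
  apply/setP=> y; apply/imsetP/imsetP => [[k _ ->]|[x /imsetP[k _ ->] ->]].
    by exists (iv k); [apply/imsetP; exists k | rewrite giv].
  by exists k; rewrite ?giv.
have cardBA : (#|B| <= #|A|)%N by rewrite gB leq_imset_card.
pose sA := enum (~: A)%SET. pose sB := enum (~: B)%SET.
have szAB : (size sA <= size sB)%N.
  rewrite /sA /sB -!cardE.
  have eA := cardsC A; have eB := cardsC B.
  have -> : #|(~: A)%SET| = (#|I| - #|A|)%N by rewrite -eA addKn.
  have -> : #|(~: B)%SET| = (#|I| - #|B|)%N by rewrite -eB addKn.
  exact: leq_sub2l.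
pose s x := if x \in A then g x else nth x sB (index x sA).
have sgood x : x \notin A -> nth x sB (index x sA) \notin B.
  move=> xA.
  have xs : x \in sA by rewrite /sA mem_enum inE.
  have : nth x sB (index x sA) \in sB.
    by apply: mem_nth; apply: leq_trans szAB; rewrite index_mem.
  by rewrite /sB mem_enum inE.
exists s; split; last first.
  by move=> k; rewrite /s ifT ?giv //; apply/imsetP; exists k.
move=> x y; rewrite /s.
case: ifP => xA; case: ifP => yA.
- case/imsetP: xA => k _ ->; case/imsetP: yA => l _ ->.
  by rewrite !giv => /eqP; rewrite -key => /eqP.
- move=> E; have := sgood y (negbT yA); rewrite -E gB.
  by rewrite (imset_f g xA).
- move=> E; have := sgood x (negbT xA); rewrite E gB.
  by rewrite (imset_f g yA).
- have xs : x \in sA by rewrite /sA mem_enum inE xA.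
  have ys : y \in sA by rewrite /sA mem_enum inE yA.
  have hxA : (index x sA < size sA)%N by rewrite index_mem.
  have hyA : (index y sA < size sA)%N by rewrite index_mem.
  have hx := leq_trans hxA szAB; have hy := leq_trans hyA szAB.
  move=> E.
  have : index x sA = index y sA.
    apply/eqP; rewrite -(nth_uniq x hx hy (enum_uniq _)) E.
    by rewrite (set_nth_default x y hy).
  move/(congr1 (nth x sA)); rewrite nth_index // (set_nth_default y x hyA).
  by rewrite nth_index.
Qed.

Theorem lemma4p5 (R : realType) (n : nat) (Theta : tensor_family R n)
  (Hfield : forall I : finType, tensor_field (Theta I))
  (Hcong : congruent_family Theta)
  (I : finType) (lambda : R) (hl : 0 < lambda) (iv jv : 'I_n -> I)
  (hP : Ppart iv = Ppart jv) :
  Theta I (fun x => lambda * @cI R I x) (fun k => @delta R _ (iv k))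
  = Theta I (fun x => lambda * @cI R I x) (fun k => @delta R _ (jv k)).
Proof.
have key k l : (iv l == iv k) = (jv l == jv k).
  apply/idP/idP; first exact: Ppart_key.
  exact: (@Ppart_key I n jv iv (esym hP) k l).
have [s [sinj siv]] := @ext_inj I n iv jv key.
pose K (i i' : I) : R := (i' == s i)%:R.
have pushE x i' : Defs.pushforward K x i' = x (invF sinj i').
  rewrite /Defs.pushforward (bigD1 (invF sinj i')) //= /K f_invF eqxx mul1r.
  rewrite big1 ?addr0 // => i /negbTE Hi.
  by rewrite -(canF_eq (f_invF sinj)) eq_sym Hi mul0r.
have HK : congruent_kernel K.
  split; [split|].
  - by move=> i i'; rewrite /K ler0n.
  - move=> i; rewrite (bigD1 (s i)) //= /K eqxx big1 ?addr0 // => j /negbTE -> //.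
  - exists (invF sinj) => i i' Hi; rewrite /K.
    by rewrite -(canF_eq (f_invF sinj)) (negbTE Hi).
have HM : forall mu, @Mplus R I mu -> @Mplus R I (Defs.pushforward K mu).
  by move=> mu Hmu i'; rewrite pushE; apply: Hmu.
have Hc : @Mplus R I (fun x => lambda * @cI R I x).
  move=> i; rewrite /cI mulr_gt0 // invr_gt0 ltr0n.
  by apply/card_gt0P; exists i.
pose c := (fun x => lambda * @cI R I x).
have H := Hcong I I K HK HM c Hc (fun k => @delta R _ (iv k)).
have Ec : Defs.pushforward K c = c.
  by apply: funext => i'; rewrite pushE.
have Ed : (fun k => Defs.pushforward K (@delta R _ (iv k))) = (fun k => @delta R _ (jv k)).
  apply: funext => k; apply: funext => i'.
  by rewrite pushE /delta (canF_eq (f_invF sinj)) siv.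
rewrite Ec Ed in H.
exact: (esym H).
Qed.
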